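(* Let $\mathcal X=\{1,\ldots,n\}$, $N\ge1$, and let $M=[m_{ij}]$ be an $n\times n$ matrix with nonnegative entries such that all entries of $M^N$ are positive. Let $\lambda_M>0$ be the spectral radius of $M$ (its Perron eigenvalue), and let $\phi,\hat\phi$ be right and left eigenvectors of $M$ for $\lambda_M$ with strictly positive entries ($M\phi=\lambda_M\phi$, $M^T\hat\phi=\lambda_M\hat\phi$), normalized so that $\sum_{x\in\mathcal X}\phi(x)\hat\phi(x)=1$. Define the probability distribution $\bar\nu(x)=\phi(x)\hat\phi(x)$. Let $\mu_0$ be a measure on $\mathcal X$ with $\mu_0(x)>0$ for all $x$, and let $\mathfrak M$ be the measure on $\mathcal X^{N+1}$ given by $\mathfrak M(x_0,\ldots,x_N)=\mu_0(x_0)m_{x_0x_1}\cdots m_{x_{N-1}x_N}$. Then the solution $\mathfrak M^*[\bar\nu,\bar\nu]$ of the problem of minimizing $\mathbb D(P\|\mathfrak M)$ over all probability distributions $P$ on $\mathcal X^{N+1}$ whose marginals at times $0$ and $N$ both equal $\bar\nu$ is a Markov measure with the time-invariant transition matrix $$\bar\Pi=\lambda_M^{-1}\operatorname{diag}(\phi)^{-1}M\operatorname{diag}(\phi),$$ and $\bar\nu$ is an invariant measure of $\bar\Pi$, i.e. $\bar\Pi^T\bar\nu=\bar\nu$.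
   Context: Relative entropy of a probability distribution $P$ with respect to a nonnegative measure $Q$ on a finite set: $\mathbb D(P\|Q)=\sum_x P(x)\log\frac{P(x)}{Q(x)}$ if $\mathrm{supp}(P)\subseteq\mathrm{supp}(Q)$ (with $0\log0=0$), and $+\infty$ otherwise. *)

(* Defs.v *)
From HB Require Import structures.
From mathcomp Require Import all_boot all_order all_algebra.
From mathcomp Require Import constructive_ereal reals exp.
From mathcomp Require Import complex.
Set Implicit Arguments. Unset Strict Implicit. Unset Printing Implicit Defensive.
Import Order.TTheory GRing.Theory Num.Theory.
Local Open Scope ring_scope.

Definition relent (R : realType) (T : finType) (P Q : T -> R) : \bar R :=
  if [forall x, (P x != 0) ==> (Q x != 0)] then
    (\sum_(x : T) (if P x == 0 then 0 else P x * ln (P x / Q x)))%:E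
  else +oo%E.

Definition is_prob (R : realType) (T : finType) (P : T -> R) : Prop :=
  (forall x, 0 <= P x) /\ \sum_(x : T) P x = 1.

Definition path_space (n N : nat) := {ffun 'I_N.+1 -> 'I_n}.

Definition marg (R : realType) (n N : nat) (P : path_space n N -> R) (t : 'I_N.+1)
  (x : 'I_n) : R := \sum_(w : path_space n N | w t == x) P w.

Definition markov_meas (R : realType) (n N : nat) (mu : 'I_n -> R) (K : 'M[R]_n)
  (w : path_space n N) : R :=
  mu (w ord0) * \prod_(t < N) K (w (widen_ord (leqnSn N) t)) (w (lift ord0 t)).

Definition spectral_radius (R : realType) (n : nat) (M : 'M[R]_n) (r : R) : Prop :=
  let Mc := map_mx (fun a : R => (a%:C)%C) M in
  (exists z : R[i], root (char_poly Mc) z /\ `|z| = (r%:C)%C) /\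
  (forall z : R[i], root (char_poly Mc) z -> `|z| <= (r%:C)%C).

(* Main.v *)
Require Import Defs.
From HB Require Import structures.
From mathcomp Require Import all_boot all_order all_algebra.
From mathcomp Require Import constructive_ereal reals exp.
From mathcomp Require Import complex.
From mathcomp Require Import ring lra.
Import Order.TTheory GRing.Theory Num.Theory.
Local Open Scope ring_scope.
Set Implicit Arguments. Unset Strict Implicit. Unset Printing Implicit Defensive.


Section Chain.
Variables (R : realType) (n : nat) (K : 'M[R]_n).

Definition Tf (f : 'I_n -> R) : 'I_n -> R := fun i => \sum_j K i j * f j.
Definition Ua (a : 'I_n -> R) : 'I_n -> R := fun j => \sum_i a i * K i j.

Definition glue N (x : 'I_n) (v : path_space n N) : path_space n N.+1 :=
  [ffun i => if unlift ord0 i is Some j then v j else x].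
Definition ungl N (w : path_space n N.+1) : 'I_n * path_space n N :=
  (w ord0, [ffun j => w (lift ord0 j)]).

Lemma glue_bij N : bijective (fun p : 'I_n * path_space n N => glue p.1 p.2).
Proof.
exists (@ungl N).
- case=> x v; rewrite /ungl /glue /=; congr pair.
    by rewrite ffunE unlift_none.
  by apply/ffunP=> j; rewrite !ffunE liftK.
- move=> w; apply/ffunP=> i; rewrite /ungl /glue /= ffunE.
  by case: unliftP => [j ->|->] //; rewrite ffunE.
Qed.

Lemma chain_sum N (a f : 'I_n -> R) :
  \sum_(w : path_space n N) a (w ord0) *
     \prod_(t < N) K (w (widen_ord (leqnSn N) t)) (w (lift ord0 t)) * f (w ord_max)
  = \sum_i a i * iter N Tf f i.
Proof.
elim: N a => [|N IH] a.
  rewrite (reindex (fun x : 'I_n => [ffun _ : 'I_1 => x])) /=; last first.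
    exists (fun w : path_space n 0 => w ord0) => [x _|w _]; first by rewrite ffunE.
    by apply/ffunP=> i; rewrite !ffunE (ord1 i).
  apply: eq_bigr => x _; rewrite !ffunE big_ord0 mulr1.
  by [].
rewrite (reindex _ (onW_bij _ (glue_bij N))) /=.
rewrite -(pair_big xpredT xpredT (fun x v => a (glue x v ord0) *
   \prod_(t < N.+1) K (glue x v (widen_ord (leqnSn N.+1) t)) (glue x v (lift ord0 t))
   * f (glue x v ord_max))) /=.
apply: eq_bigr => x _.
have E0 v : glue x v ord0 = x by rewrite /glue ffunE unlift_none.
have E1 v j : glue x v (lift ord0 j) = v j by rewrite /glue ffunE liftK.
transitivity (a x * \sum_(v : path_space n N) K x (v ord0) *
   \prod_(t < N) K (v (widen_ord (leqnSn N) t)) (v (lift ord0 t)) * f (v ord_max)).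
  rewrite big_distrr /=; apply: eq_bigr => v _.
  rewrite big_ord_recl E0.
  have -> : widen_ord (leqnSn N.+1) ord0 = ord0 :> 'I_N.+2 by apply: val_inj.
  rewrite E0 E1.
  have -> : (ord_max : 'I_N.+2) = lift ord0 ord_max by apply: val_inj.
  rewrite E1 !mulrA; congr (_ * _ * _).
  apply: eq_bigr => t _.
  have -> : widen_ord (leqnSn N.+1) (lift ord0 t) = lift ord0 (widen_ord (leqnSn N) t).
    by apply: val_inj.
  by rewrite !E1.
by rewrite IH.
Qed.
End Chain.


Section Ent.
Variables (R : realType) (T : finType).

Lemma ln_le_sub1 (y : R) : 0 < y -> ln y <= y - 1.
Proof.
move=> y0; have := expR_ge1Dx (ln y); rewrite lnK ?posrE //.
by rewrite lerBrDl addrC.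
Qed.

Lemma ln_eq_sub1 (y : R) : 0 < y -> ln y = y - 1 -> y = 1.
Proof.
move=> y0 E; have [/eqP l0|l0] := eqVneq (ln y) 0.
  by apply/eqP; rewrite -ln_eq0.
have := expR_gt1Dx l0; rewrite lnK ?posrE // E.
by rewrite addrC subrK ltxx.
Qed.

Definition Dkl (P Q : T -> R) : R :=
  \sum_w (if P w == 0 then 0 else P w * ln (P w / Q w)).

Definition eterm (P Q : T -> R) w :=
  if P w == 0 then Q w else P w * ln (P w / Q w) - P w + Q w.

Lemma Dkl_eterm P Q : is_prob P -> is_prob Q -> Dkl P Q = \sum_w eterm P Q w.
Proof.
move=> [_ P1] [_ Q1].
have -> : \sum_w eterm P Q w = Dkl P Q + \sum_w (Q w - P w).
  rewrite /Dkl -big_split /=; apply: eq_bigr => w _; rewrite /eterm.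
  by case: eqP => [->|_]; rewrite ?add0r ?subr0 // addrA addrAC.
by rewrite sumrB P1 Q1 subrr addr0.
Qed.

Lemma eterm_ge0 P Q w : (forall w, 0 <= P w) -> (forall w, 0 <= Q w) ->
  (P w != 0 -> 0 < Q w) -> 0 <= eterm P Q w.
Proof.
move=> P0 Q0 PQ; rewrite /eterm; case: eqP => // /eqP Pn0.
have Pp : 0 < P w by rewrite lt0r Pn0 P0.
have Qp := PQ Pn0.
have : ln (Q w / P w) <= Q w / P w - 1 by apply: ln_le_sub1; rewrite divr_gt0.
rewrite -[P w / Q w]invf_div lnV ?posrE ?divr_gt0 // => H.
have : P w * ln (Q w / P w) <= P w * (Q w / P w - 1) by rewrite ler_pM2l.
rewrite mulrBr mulr1 mulrCA divff ?mulr1 //.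
move=> H2; rewrite mulrN; lra.
Qed.

Lemma Dkl_ge0 P Q : is_prob P -> is_prob Q -> (forall w, P w != 0 -> 0 < Q w) ->
  0 <= Dkl P Q.
Proof.
move=> hP hQ PQ; rewrite Dkl_eterm //; apply: sumr_ge0 => w _.
by apply: eterm_ge0 => //; [case: hP|case: hQ|apply: PQ].
Qed.

Lemma Dkl_eq0 P Q : is_prob P -> is_prob Q -> (forall w, P w != 0 -> 0 < Q w) ->
  Dkl P Q = 0 -> forall w, P w = Q w.
Proof.
move=> hP hQ PQ; rewrite Dkl_eterm // => S0 w.
have H : forall i : T, true -> 0 <= eterm P Q i.
  by move=> i _; apply: eterm_ge0 => //; [case: hP|case: hQ|apply: PQ].
have := @psumr_eq0P _ _ _ _ H S0 w isT; rewrite /eterm.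
case: eqP => [-> -> //|/eqP Pn0 E].
have Pp : 0 < P w by rewrite lt0r Pn0 (proj1 hP).
have Qp := PQ w Pn0.
have E2 : ln (Q w / P w) = Q w / P w - 1.
  move: E; rewrite -[P w / Q w]invf_div lnV ?posrE ?divr_gt0 // => E.
  apply: (mulfI Pn0); rewrite mulrBr mulr1 mulrCA divff ?mulr1 //.
  lra.
have := ln_eq_sub1 (divr_gt0 Qp Pp) E2.
by move=> /(congr1 (fun t => t * P w)); rewrite mulfVK ?gt_eqF // mul1r => ->.
Qed.
End Ent.


Section It.
Variables (R : realType) (n : nat) (K : 'M[R]_n).

Lemma dual1 (a f : 'I_n -> R) :
  \sum_i a i * Tf K f i = \sum_j Ua K a j * f j.
Proof.
rewrite /Tf /Ua; under eq_bigr do rewrite big_distrr.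
rewrite exchange_big; apply: eq_bigr => j _; rewrite big_distrl.
by apply: eq_bigr => i _ /=; rewrite mulrA.
Qed.

Lemma dualN N (a f : 'I_n -> R) :
  \sum_i a i * iter N (Tf K) f i = \sum_j iter N (Ua K) a j * f j.
Proof.
elim: N a f => [//|N IH] a f.
by rewrite iterSr IH dual1 iterS.
Qed.

Lemma iterT1 N i : (forall i, \sum_j K i j = 1) -> iter N (Tf K) (fun _ => 1) i = 1.
Proof.
move=> H; elim: N i => [//|N IH] i /=.
by rewrite /Tf; under eq_bigr do rewrite IH mulr1; apply: H.
Qed.

Lemma iterUinv N a j : (forall j, \sum_i a i * K i j = a j) -> iter N (Ua K) a j = a j.
Proof.
move=> H; elim: N j => [//|N IH] j /=.
by rewrite /Ua; under eq_bigr do rewrite IH; apply: H.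
Qed.
End It.

Section Ent2.
Variables (R : realType) (T : finType).

Lemma relent_decomp (P Q F r : T -> R) :
  (forall w, 0 < r w) -> (forall w, Q w = r w * F w) -> (forall w, 0 <= F w) ->
  (forall w, 0 <= P w) ->
  [forall x, (P x != 0) ==> (F x != 0)] ->
  relent P F = (Dkl P Q + \sum_w P w * ln (r w))%:E.
Proof.
move=> r0 QE F0 P0 supp; rewrite /relent supp; congr (_%:E).
rewrite /Dkl -big_split /=; apply: eq_bigr => w _.
case: eqP => [->|/eqP Pn0]; first by rewrite mul0r addr0.
have Fn0 : F w != 0 by move/forallP: supp => /(_ w); rewrite Pn0.
have Fp : 0 < F w by rewrite lt0r Fn0 F0.
have Pp : 0 < P w by rewrite lt0r Pn0 P0.
have Qp : 0 < Q w by rewrite QE mulr_gt0.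
rewrite -mulrDr -lnM ?posrE ?divr_gt0 //; congr (_ * ln _).
by rewrite QE invfM !mulrA mulrAC mulrVK // unitfE gt_eqF.
Qed.

Lemma relent_inf (P F : T -> R) :
  ~~ [forall x, (P x != 0) ==> (F x != 0)] -> relent P F = +oo%E.
Proof. by rewrite /relent => /negPf ->. Qed.
End Ent2.


Lemma marg_lin (R : realType) n N (P : path_space n N -> R) t (h : 'I_n -> R) :
  \sum_w P w * h (w t) = \sum_x marg P t x * h x.
Proof.
rewrite (partition_big (fun w : path_space n N => w t) xpredT) //=.
apply: eq_bigr => x _; rewrite /marg big_distrl /=.
by apply: eq_bigr => w /eqP ->.
Qed.

Lemma telescope_path (R : realType) n N (w : path_space n N) (g : 'I_n -> R) :
  (1 <= N)%N -> (forall i, g i != 0) ->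
  \prod_(t < N) (g (w (lift ord0 t)) / g (w (widen_ord (leqnSn N) t)))
  = g (w ord_max) / g (w ord0).
Proof.
move=> N1 gn0.
pose h k := g (w (inord k)).
transitivity (\prod_(0 <= k < N) (h k.+1 / h k)).
  rewrite big_mkord; apply: eq_bigr => t _; rewrite /h; congr (g (w _) / g (w _)).
    by apply: val_inj; rewrite /= inordK // ltnS.
  by apply: val_inj; rewrite /= inordK // ltnS ltnW.
rewrite telescope_prodf; [|by move=> k _; apply: gn0|by []]; rewrite /h; congr (g (w _) / g (w _)).
  by apply: val_inj; rewrite /= inordK.
by apply: val_inj; rewrite /= inordK.
Qed.

Unset Implicit Arguments.


Theorem proposition3p2 (R : realType) (n N : nat) (M : 'M[R]_n)
  (lam : R) (phi phih : 'rV[R]_n) (mu0 : 'I_n -> R) :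
  (1 <= N)%N ->
  (forall i j, 0 <= M i j) ->
  (forall i j, 0 < (M ^+ N) i j) ->
  spectral_radius M lam ->
  0 < lam ->
  (forall i, 0 < phi 0 i) -> (forall i, 0 < phih 0 i) ->
  M *m phi^T = lam *: phi^T ->
  M^T *m phih^T = lam *: phih^T ->
  \sum_(x < n) phi 0 x * phih 0 x = 1 ->
  (forall x, 0 < mu0 x) ->
  let nubar : 'rV[R]_n := \row_x (phi 0 x * phih 0 x) in
  let Pibar : 'M[R]_n := lam^-1 *: (invmx (diag_mx phi) *m M *m diag_mx phi) in
  let frakM := markov_meas (N := N) mu0 M in
  let Pstar := markov_meas (N := N) (fun x => nubar 0 x) Pibar in
  let feasible (P : path_space n N -> R) :=
    is_prob P /\ (forall x, marg P ord0 x = nubar 0 x)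
              /\ (forall x, marg P ord_max x = nubar 0 x) in
  [/\ feasible Pstar,
      (forall P, feasible P -> (relent Pstar frakM <= relent P frakM)%E),
      (forall P, feasible P -> relent P frakM = relent Pstar frakM -> P = Pstar)
    & Pibar^T *m nubar^T = nubar^T].
Proof.
move=> N1 M0 _ _ lam0 phi0 phih0 Hphi Hphih Hnorm mu00 nubar Pibar frakM Pstar feasible.
have phin0 i : phi 0 i != 0 by rewrite gt_eqF.
pose E := diag_mx (\row_i (phi 0 i)^-1).
have DE : diag_mx phi *m E = 1%:M.
  apply/matrixP=> i j; rewrite mul_diag_mx !mxE.
  case: (eqVneq i j) => [->|ij]; first by rewrite mulr1n divff.
  by rewrite mulr0n mulr0.
have Du : diag_mx phi \in unitmx.
  rewrite unitmxE det_diag unitfE; apply/prodf_neq0 => i _; exact: phin0.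
have invD : invmx (diag_mx phi) = E.
  by have := mulKmx Du E; rewrite DE mulmx1.
have PiE i j : Pibar i j = lam^-1 * ((phi 0 i)^-1 * M i j * phi 0 j).
  by rewrite /Pibar invD mul_mx_diag mxE mxE mul_diag_mx !mxE.
have nuE x : nubar 0 x = phi 0 x * phih 0 x by rewrite mxE.
have rowsum i : \sum_j Pibar i j = 1.
  have := congr1 (fun A : 'M[R]_(n,1) => A i ord0) Hphi; rewrite !mxE => H.
  under eq_bigr do rewrite PiE.
  rewrite -big_distrr /=.
  under eq_bigr do rewrite -mulrA.
  rewrite -big_distrr /=.
  have H2 : \sum_j M i j * phi 0 j = lam * phi 0 i.
    by rewrite (_ : lam * phi 0 i = lam * phi ord0 i) // -H; apply: eq_bigr => j _; rewrite mxE.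
  by rewrite H2; field; rewrite ?phin0 ?gt_eqF.
have colsum j : \sum_i nubar 0 i * Pibar i j = nubar 0 j.
  have := congr1 (fun A : 'M[R]_(n,1) => A j ord0) Hphih; rewrite !mxE => H.
  have H2 : \sum_i M i j * phih 0 i = lam * phih 0 j.
    by rewrite (_ : lam * phih 0 j = lam * phih ord0 j) // -H; apply: eq_bigr => i _; rewrite !mxE.
  transitivity (lam^-1 * phi 0 j * \sum_i M i j * phih 0 i).
    rewrite big_distrr; apply: eq_bigr => i _ /=; rewrite nuE PiE.
    by field; rewrite phin0 gt_eqF.
  by rewrite H2; field; rewrite gt_eqF.
pose r (w : path_space n N) := phih 0 (w ord0) * phi 0 (w ord_max) / (lam ^+ N * mu0 (w ord0)).
have r0 w : 0 < r w.
  by rewrite /r divr_gt0 ?mulr_gt0 ?exprn_gt0.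
have F0 w : 0 <= frakM w.
  by rewrite /frakM /markov_meas; apply: mulr_ge0; [exact: ltW|apply: prodr_ge0 => t _; exact: M0].
have QE w : Pstar w = r w * frakM w.
  rewrite /Pstar /frakM /markov_meas.
  under eq_bigr do rewrite PiE.
  set PM := \prod_(t < N) M _ _.
  have -> : \prod_(t < N) (lam^-1 * ((phi 0 (w (widen_ord (leqnSn N) t)))^-1 *
      M (w (widen_ord (leqnSn N) t)) (w (lift ord0 t)) * phi 0 (w (lift ord0 t))))
    = lam^-1 ^+ N * PM * (phi 0 (w ord_max) / phi 0 (w ord0)).
    rewrite -(telescope_path w (g := fun i => phi 0 i)) //.
    have cN : lam^-1 ^+ N = \prod_(t < N) lam^-1 by rewrite prodr_const card_ord.
    rewrite cN -!big_split /=; apply: eq_bigr => t _.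
    by rewrite /=; field; rewrite phin0 gt_eqF.
  rewrite /r nuE exprVn; field.
  by rewrite expf_neq0 ?gt_eqF // phin0 gt_eqF.
have Q0 w : 0 <= Pstar w by rewrite QE; apply: mulr_ge0; [exact: ltW|exact: F0].
have sumQ : \sum_w Pstar w = 1.
  transitivity (\sum_(w : path_space n N) (fun i => nubar 0 i) (w ord0) *
     \prod_(t < N) Pibar (w (widen_ord (leqnSn N) t)) (w (lift ord0 t)) *
     (fun _ => 1) (w ord_max)).
    by apply: eq_bigr => w _; rewrite mulr1.
  rewrite (chain_sum Pibar N (fun i => nubar 0 i) (fun _ => 1)); under eq_bigr do rewrite iterT1 // mulr1.
  by rewrite -Hnorm; apply: eq_bigr => i _; rewrite nuE.
have marg0 x : marg Pstar ord0 x = nubar 0 x.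
  rewrite /marg big_mkcond /=.
  transitivity (\sum_(w : path_space n N)
     (fun i => if i == x then nubar 0 i else 0) (w ord0) *
     \prod_(t < N) Pibar (w (widen_ord (leqnSn N) t)) (w (lift ord0 t)) *
     (fun _ => 1) (w ord_max)).
    by apply: eq_bigr => w _ /=; case: eqP => _; rewrite ?mulr1 ?mul0r.
  rewrite (chain_sum Pibar N (fun i => if i == x then nubar 0 i else 0) (fun _ => 1)) (bigD1 x) //= eqxx iterT1 // mulr1 big1 ?addr0 //.
  by move=> i /negPf ->; rewrite mul0r.
have margN x : marg Pstar ord_max x = nubar 0 x.
  rewrite /marg big_mkcond /=.
  transitivity (\sum_(w : path_space n N) (fun i => nubar 0 i) (w ord0) *
     \prod_(t < N) Pibar (w (widen_ord (leqnSn N) t)) (w (lift ord0 t)) *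
     (fun j => if j == x then 1 else 0) (w ord_max)).
    by apply: eq_bigr => w _ /=; case: eqP => _; rewrite ?mulr1 ?mulr0.
  rewrite (chain_sum Pibar N (fun i => nubar 0 i) (fun j => if j == x then 1 else 0)) dualN (bigD1 x) //= eqxx mulr1 iterUinv // big1 ?addr0 //.
  by move=> j /negPf ->; rewrite mulr0.
have fQ : feasible Pstar by split; [split|split].
pose c x := phih 0 x / (lam ^+ N * mu0 x).
pose K0 := \sum_x nubar 0 x * ln (c x) + \sum_x nubar 0 x * ln (phi 0 x).
have KP P : feasible P -> \sum_w P w * ln (r w) = K0.
  move=> [_ [m0 mN]].
  transitivity (\sum_w P w * ln (c (w ord0)) + \sum_w P w * ln (phi 0 (w ord_max))).
    rewrite -big_split; apply: eq_bigr => w _ /=.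
    rewrite -mulrDr -lnM ?posrE ?divr_gt0 ?mulr_gt0 ?exprn_gt0 //.
    by rewrite /r /c mulrAC.
  rewrite (marg_lin P ord0 (fun x => ln (c x))) (marg_lin P ord_max (fun x => ln (phi 0 x))).
  by rewrite /K0; congr (_ + _); apply: eq_bigr => x _; rewrite ?m0 ?mN.
have suppQ : [forall w, (Pstar w != 0) ==> (frakM w != 0)].
  apply/forallP => w; apply/implyP => H; apply/eqP => Fz; move: H.
  by rewrite QE Fz mulr0 eqxx.
have DQQ : Dkl Pstar Pstar = 0.
  by apply: big1 => w _; case: eqP => // /eqP h; rewrite divff // ln1 mulr0.
have RQ : relent Pstar frakM = K0%:E.
  by rewrite (relent_decomp r0 QE F0 Q0 suppQ) DQQ add0r KP.
have pos (P : path_space n N -> R) : [forall w, (P w != 0) ==> (frakM w != 0)] -> forall w, P w != 0 -> 0 < Pstar w.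
  move=> supp w Pn0; have := forallP supp w; rewrite Pn0 /= => Fn0.
  by rewrite QE mulr_gt0 // lt0r Fn0 F0.
split => //.
- move=> P fP; have [supp|nsupp] := boolP [forall w, (P w != 0) ==> (frakM w != 0)].
    have P0 : forall w, 0 <= P w by case: fP => [[]].
    rewrite RQ (relent_decomp r0 QE F0 P0 supp) KP // lee_fin lerDr.
    by apply: Dkl_ge0 => //; [case: fP|apply: pos].
  by rewrite (relent_inf nsupp) leey.
- move=> P fP; have [supp|nsupp] := boolP [forall w, (P w != 0) ==> (frakM w != 0)].
    have P0 : forall w, 0 <= P w by case: fP => [[]].
    rewrite RQ (relent_decomp r0 QE F0 P0 supp) KP // => -[H].
    have D0 : Dkl P Pstar = 0 by lra.
    by apply: boolp.funext => w; exact: (Dkl_eq0 (proj1 fP) (proj1 fQ) (pos P supp) D0 w).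
  by rewrite (relent_inf nsupp) RQ.
- apply/matrixP => i j; rewrite (ord1 j) !mxE.
  rewrite -nuE -[RHS]colsum; apply: eq_bigr => k _; rewrite !mxE mulrC.
  by [].
Qed.
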